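(* Let $\gamma$ be an analytic split-Fourier curve, $\gamma(\theta)=(\gamma_1+k'\gamma_2,\gamma_3)=\big(\sum_{n=-\infty}^{\infty}c_ne^{k'n\theta},\sum_{n=-\infty}^{\infty}d_ne^{k'n\theta}\big)$. Then the coefficients $c_n$ and $d_n$ are uniquely determined by $\gamma$.
   Context: $\mathbb{C}'$ denotes the split-complex numbers $x+k'y$, $k'^2=1$, and $e^{k'\theta}=\cosh\theta+k'\sinh\theta$. $\mathbb{L}^3$ ($\mathbb{R}^3$ with metric $-dx^2+dy^2+dz^2$) is identified with $\mathbb{C}'\times\mathbb{R}$ via $(x,y,z)\leftrightarrow(x+k'y,z)$. A curve $\gamma:\mathbb{H}^1\to\mathbb{L}^3$ (with $\mathbb{H}^1=\{e^{k'\theta}:\theta\in\mathbb{R}\}$, parametrized by $\theta$) is a split-Fourier curve if it has an expansion $\gamma(\theta)=\big(\sum_n c_ne^{k'n\theta},\sum_n d_ne^{k'n\theta}\big)$ with $c_n,d_n\in\mathbb{C}'$, only finitely many nonzero, and with $\gamma_3=\sum_nd_ne^{k'n\theta}$ real-valued. Analytic means each component is locally given by a convergent power series. *)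

(* Defs.v *)
From Stdlib Require Import Reals ZArith List.
From Coquelicot Require Import Coquelicot.
Open Scope R_scope.

(* Split-complex numbers x + k' y, k'^2 = 1, as pairs (x, y). *)
Record splitC := SC { sre : R; sim : R }.

Definition sc0 : splitC := SC 0 0.
Definition scadd (a b : splitC) : splitC := SC (sre a + sre b) (sim a + sim b).
Definition scmul (a b : splitC) : splitC :=
  SC (sre a * sre b + sim a * sim b) (sre a * sim b + sim a * sre b).

Definition scexp (t : R) : splitC := SC (cosh t) (sinh t).

Definition zrange (N : nat) : list Z :=
  map (fun k => (Z.of_nat k - Z.of_nat N)%Z) (seq 0 (2 * N + 1)).
Definition scsumZ (N : nat) (f : Z -> splitC) : splitC :=
  fold_right (fun n acc => scadd (f n) acc) sc0 (zrange N).

(* The split-Fourier series  sum_n c_n e^{k' n theta}  (coefficients vanishing for |n| > N). *)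
Definition sfourier (N : nat) (c : Z -> splitC) (theta : R) : splitC :=
  scsumZ N (fun n => scmul (c n) (scexp (IZR n * theta))).

(* A curve in L^3 = C' x R, parametrized by theta (point e^{k'theta} of H^1). *)
Definition curveL3 := R -> (splitC * R)%type.

(* gamma has split-Fourier expansion with coefficients (c_n), (d_n):
   only finitely many nonzero coefficients, the expansion holds for every theta,
   and gamma_3 = sum d_n e^{k' n theta} is real-valued. *)
Definition split_fourier_expansion (gamma : curveL3) (c d : Z -> splitC) : Prop :=
  exists N : nat,
    (forall n : Z, (Z.of_nat N < Z.abs n)%Z -> c n = sc0 /\ d n = sc0) /\
    (forall theta : R,
        fst (gamma theta) = sfourier N c theta /\
        SC (snd (gamma theta)) 0 = sfourier N d theta).

Definition is_split_fourier_curve (gamma : curveL3) : Prop :=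
  exists c d, split_fourier_expansion gamma c d.

Definition real_analytic (f : R -> R) : Prop :=
  forall x0 : R, exists r : R, 0 < r /\ exists a : nat -> R,
    forall x : R, Rabs (x - x0) < r -> is_pseries a (x - x0) (f x).

Definition analytic_curve (gamma : curveL3) : Prop :=
  real_analytic (fun t => sre (fst (gamma t))) /\
  real_analytic (fun t => sim (fst (gamma t))) /\
  real_analytic (fun t => snd (gamma t)).

(* Main.v *)
Require Import Defs.
From Stdlib Require Import Reals ZArith List Lia Lra.
From Coquelicot Require Import Coquelicot.
Open Scope R_scope.

Lemma poly_at0 K (b : nat -> R) : sum_f_R0 (fun k => b k * 0 ^ k) K = b 0%nat.
Proof. induction K; simpl; [ring|]. rewrite IHK; ring. Qed.

Lemma poly0 : forall K (b : nat -> R),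
  (forall x, 0 < x -> sum_f_R0 (fun k => b k * x ^ k) K = 0) ->
  forall k, (k <= K)%nat -> b k = 0.
Proof.
  induction K; intros b H k Hk.
  - assert (k = 0%nat) by lia; subst. specialize (H 1 ltac:(lra)). simpl in H. lra.
  - assert (Hb0 : b 0%nat = 0).
    { pose (f := fun y => sum_f_R0 (fun k => b k * y ^ k) (S K)).
      assert (Hc : continuity_pt f 0) by (apply derivable_continuous_pt, derivable_pt_finite_sum).
      assert (F0 : f 0 = b 0%nat) by (unfold f; apply poly_at0).
      destruct (Req_dec (b 0%nat) 0) as [|Hne]; auto.
      exfalso. unfold continuity_pt, continue_in, limit1_in, limit_in in Hc.
      specialize (Hc (Rabs (b 0%nat)) ltac:(apply Rabs_pos_lt; auto)).
      destruct Hc as [alp [Halp Hc]].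
      specialize (Hc (alp/2)).
      assert (F1 : f (alp/2) = 0) by (unfold f; apply H; lra).
      rewrite F0, F1 in Hc.
      assert (Hx : D_x no_cond 0 (alp / 2) /\ dist R_met (alp / 2) 0 < alp).
      { split. split. constructor. lra. simpl. unfold Rdist. rewrite Rminus_0_r, Rabs_pos_eq; lra. }
      specialize (Hc Hx). simpl in Hc. unfold Rdist in Hc. rewrite Rminus_0_l, Rabs_Ropp in Hc. lra. }
    assert (H' : forall x, 0 < x -> sum_f_R0 (fun k => b (S k) * x ^ k) K = 0).
    { intros x Hx. specialize (H x Hx). rewrite decomp_sum in H by lia.
      simpl pred in H. rewrite Hb0 in H.
      assert (E : sum_f_R0 (fun i => b (S i) * x ^ S i) K = x * sum_f_R0 (fun k => b (S k) * x ^ k) K).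
      { rewrite scal_sum. apply sum_eq. intros; simpl; ring. }
      rewrite E in H. simpl in H. 
      apply (Rmult_eq_reg_l x); [|lra]. lra. }
    destruct k. auto. apply (IHK _ H'). lia.
Qed.

Definition lsum (l : list Z) (g : Z -> R) : R := fold_right (fun n acc => g n + acc) 0 l.

Lemma lsum_app l1 l2 g : lsum (l1 ++ l2) g = lsum l1 g + lsum l2 g.
Proof. induction l1; simpl; [ring|]. unfold lsum in *; simpl. rewrite IHl1; ring. Qed.

Lemma lsum_plus l f g : lsum l (fun n => f n + g n) = lsum l f + lsum l g.
Proof. induction l; unfold lsum in *; simpl; [ring|]. rewrite IHl; ring. Qed.

Lemma lsum_minus l f g : lsum l (fun n => f n - g n) = lsum l f - lsum l g.
Proof. induction l; unfold lsum in *; simpl; [ring|]. rewrite IHl; ring. Qed.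

Lemma lsum_ext l f g : (forall n, f n = g n) -> lsum l f = lsum l g.
Proof. intros H; induction l; unfold lsum in *; simpl; auto. rewrite IHl, H; auto. Qed.

Lemma sre_sum l f : sre (fold_right (fun n acc => scadd (f n) acc) sc0 l) = lsum l (fun n => sre (f n)).
Proof. induction l; simpl; auto. rewrite IHl; auto. Qed.
Lemma sim_sum l f : sim (fold_right (fun n acc => scadd (f n) acc) sc0 l) = lsum l (fun n => sim (f n)).
Proof. induction l; simpl; auto. rewrite IHl; auto. Qed.

Lemma lsum_map (h : nat -> Z) l g : lsum (map h l) g = fold_right (fun k acc => g (h k) + acc) 0 l.
Proof. induction l; simpl; auto. unfold lsum in *; simpl; rewrite IHl; auto. Qed.

Lemma seq_sum : forall len s (F : nat -> R),
  fold_right (fun k acc => F k + acc) 0 (seq s (S len)) = sum_f_R0 (fun k => F (s + k)%nat) len.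
Proof.
  induction len; intros s F.
  - simpl. rewrite Nat.add_0_r; ring.
  - change (seq s (S (S len))) with (s :: seq (S s) (S len)).
    cbn [fold_right]. rewrite (IHlen (S s) F). rewrite (decomp_sum _ (S len)) by lia.
    simpl pred. rewrite Nat.add_0_r. f_equal. apply sum_eq; intros.
    f_equal. lia.
Qed.

Lemma zrange_sum N g : lsum (zrange N) g =
  sum_f_R0 (fun k => g (Z.of_nat k - Z.of_nat N)%Z) (2 * N).
Proof.
  unfold zrange. rewrite lsum_map. replace (2 * N + 1)%nat with (S (2 * N)) by lia.
  rewrite seq_sum. apply sum_eq; intros. reflexivity.
Qed.

Lemma zrange_S N : zrange (S N) = ((- Z.of_nat (S N))%Z :: zrange N) ++ (Z.of_nat (S N) :: nil).
Proof.
  unfold zrange. replace (2 * S N + 1)%nat with (S (S (2 * N + 1))) by lia.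
  rewrite seq_S. change (seq 0 (S (2 * N + 1))) with (0%nat :: seq 1 (2 * N + 1)).
  rewrite <- seq_shift. rewrite map_app. cbn [map app]. rewrite map_map. f_equal. f_equal.
  - apply map_ext; intros; lia.
  - f_equal. lia.
Qed.

Lemma lsum_extend N g : (forall n, (Z.of_nat N < Z.abs n)%Z -> g n = 0) ->
  forall k, lsum (zrange (N + k)) g = lsum (zrange N) g.
Proof.
  intros Hg k. induction k.
  - rewrite Nat.add_0_r; auto.
  - rewrite Nat.add_succ_r, zrange_S, lsum_app. unfold lsum at 1 3; cbn [fold_right].
    fold (lsum (zrange (N + k)) g). rewrite IHk.
    rewrite !Hg by lia. unfold lsum at 2; cbn [fold_right]. rewrite Hg by lia. unfold lsum; ring.
Qed.

Lemma indep N a : (forall t, lsum (zrange N) (fun n => a n * exp (IZR n * t)) = 0) ->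
  forall n, (Z.abs n <= Z.of_nat N)%Z -> a n = 0.
Proof.
  intros H n Hn.
  set (b := fun k : nat => a (Z.of_nat k - Z.of_nat N)%Z).
  assert (Hp : forall x, 0 < x -> sum_f_R0 (fun k => b k * x ^ k) (2 * N) = 0).
  { intros x Hx. specialize (H (ln x)). rewrite zrange_sum in H.
    assert (E : sum_f_R0 (fun k => a (Z.of_nat k - Z.of_nat N)%Z *
                   exp (IZR (Z.of_nat k - Z.of_nat N) * ln x)) (2 * N)
             = / x ^ N * sum_f_R0 (fun k => b k * x ^ k) (2 * N)).
    { rewrite scal_sum. apply sum_eq; intros k _. unfold b.
      rewrite minus_IZR, <- !INR_IZR_INZ.
      replace ((INR k - INR N) * ln x) with (INR k * ln x + - (INR N * ln x)) by ring.
      rewrite exp_plus, exp_Ropp.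
      change (exp (INR k * ln x)) with (Rpower x (INR k)).
      change (exp (INR N * ln x)) with (Rpower x (INR N)).
      rewrite !Rpower_pow by auto. ring. }
    rewrite E in H. assert (x ^ N <> 0) by (apply pow_nonzero; lra).
    apply Rmult_integral in H. destruct H as [H|H]; auto.
    exfalso. apply (Rinv_neq_0_compat _ H0). auto. }
  pose proof (poly0 _ _ Hp (Z.to_nat (n + Z.of_nat N)) ltac:(lia)) as Hb.
  unfold b in Hb. rewrite Z2Nat.id in Hb by lia.
  replace (n + Z.of_nat N - Z.of_nat N)%Z with n in Hb by lia. auto.
Qed.

Lemma plus_formula N c t : sre (sfourier N c t) + sim (sfourier N c t) =
  lsum (zrange N) (fun n => (sre (c n) + sim (c n)) * exp (IZR n * t)).
Proof.
  unfold sfourier, scsumZ. rewrite sre_sum, sim_sum, <- lsum_plus.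
  apply lsum_ext; intro n. unfold scmul, scexp, cosh, sinh; simpl. field.
Qed.

Lemma minus_formula N c t : sre (sfourier N c t) - sim (sfourier N c t) =
  lsum (zrange N) (fun n => (sre (c n) - sim (c n)) * exp (- (IZR n * t))).
Proof.
  unfold sfourier, scsumZ. rewrite sre_sum, sim_sum, <- lsum_minus.
  apply lsum_ext; intro n. unfold scmul, scexp, cosh, sinh; simpl. field.
Qed.

Lemma combine N1 N2 (f g : Z -> R) :
  (forall n, (Z.of_nat N1 < Z.abs n)%Z -> f n = 0) ->
  (forall n, (Z.of_nat N2 < Z.abs n)%Z -> g n = 0) ->
  lsum (zrange N1) f = lsum (zrange N2) g ->
  lsum (zrange (N1 + N2)) (fun n => f n - g n) = 0.
Proof.
  intros Hf Hg E. rewrite lsum_minus, lsum_extend by auto.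
  rewrite Nat.add_comm, lsum_extend by auto. lra.
Qed.

Lemma coef_unique N1 N2 (c c' : Z -> splitC) :
  (forall n, (Z.of_nat N1 < Z.abs n)%Z -> c n = sc0) ->
  (forall n, (Z.of_nat N2 < Z.abs n)%Z -> c' n = sc0) ->
  (forall t, sfourier N1 c t = sfourier N2 c' t) -> forall n, c n = c' n.
Proof.
  intros H1 H2 E n.
  destruct (Z_lt_le_dec (Z.of_nat (N1 + N2)) (Z.abs n)) as [Hn|Hn].
  { rewrite H1, H2 by lia. auto. }
  assert (HA : forall t, lsum (zrange (N1 + N2))
     (fun n => ((sre (c n) + sim (c n)) - (sre (c' n) + sim (c' n))) * exp (IZR n * t)) = 0).
  { intro t. rewrite <- (combine N1 N2 (fun n => (sre (c n) + sim (c n)) * exp (IZR n * t))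
                 (fun n => (sre (c' n) + sim (c' n)) * exp (IZR n * t))).
    - apply lsum_ext; intro; ring.
    - intros m Hm; rewrite H1 by auto; simpl; ring.
    - intros m Hm; rewrite H2 by auto; simpl; ring.
    - rewrite <- !plus_formula, E; auto. }
  assert (HB : forall t, lsum (zrange (N1 + N2))
     (fun n => ((sre (c n) - sim (c n)) - (sre (c' n) - sim (c' n))) * exp (IZR n * t)) = 0).
  { intro t. rewrite <- (combine N1 N2 (fun n => (sre (c n) - sim (c n)) * exp (- (IZR n * - t)))
                 (fun n => (sre (c' n) - sim (c' n)) * exp (- (IZR n * - t)))).
    - apply lsum_ext; intro. replace (- (IZR n0 * - t)) with (IZR n0 * t) by ring. ring.
    - intros m Hm; rewrite H1 by auto; simpl; ring.
    - intros m Hm; rewrite H2 by auto; simpl; ring.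
    - rewrite <- !minus_formula, E; auto. }
  pose proof (indep _ _ HA n Hn) as A. pose proof (indep _ _ HB n Hn) as B.
  cbv beta in A, B.
  destruct (c n) as [x y], (c' n) as [x' y']. simpl in *. f_equal; lra.
Qed.

Theorem theorem5p1 (gamma : curveL3) :
  analytic_curve gamma ->
  is_split_fourier_curve gamma ->
  forall c d c' d' : Z -> splitC,
    split_fourier_expansion gamma c d ->
    split_fourier_expansion gamma c' d' ->
    forall n : Z, c n = c' n /\ d n = d' n.
Proof.
  intros _ _ c d c' d' [N1 [Z1 E1]] [N2 [Z2 E2]] n. split.
  - apply (coef_unique N1 N2).
    + intros m Hm; apply Z1; auto.
    + intros m Hm; apply Z2; auto.
    + intro t. destruct (E1 t) as [A1 _], (E2 t) as [A2 _]. rewrite <- A1, <- A2. auto.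
  - apply (coef_unique N1 N2).
    + intros m Hm; apply Z1; auto.
    + intros m Hm; apply Z2; auto.
    + intro t. destruct (E1 t) as [_ A1], (E2 t) as [_ A2]. rewrite <- A1, <- A2. auto.
Qed.
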